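(* Let $m,n,k$ be positive integers, $A\in\mathbb{R}^{m\times n}$ satisfying the $(2k+1)$-RIP with $\|A_i\|_2=1$ for every column $A_i$, $x^*\in\mathbb{R}^n$ with support $S^*$, $|S^*|\le k$, $e\in\mathbb{R}^m$, $y=Ax^*+e$. For every initialization $\mathcal{X}^0$, every $\eta>0$ and every $t\in\mathbb{N}$, the SEA iterates satisfy $$\left\|\frac{u^t}{\eta}-A^T(Ax^t-y)\right\|_\infty=\frac1\eta\|b^t\|_\infty\le\alpha_k^{RIP}\|x^*\|_2+\gamma_k^{RIP}\|e\|_2,$$ where $b^t=u^t-\eta A^T(Ax^t-y)$.
   Context: For $l\in\{1,\dots,n\}$, the restricted isometry constant $\delta_l$ of $A$ is the smallest $\delta\ge0$ such that $(1-\delta)\|x\|_2^2\le\|Ax\|_2^2\le(1+\delta)\|x\|_2^2$ for all $x$ with at most $l$ nonzero entries; $A$ satisfies the $l$-RIP if $\delta_l<1$. $\alpha_k^{RIP}=\delta_{2k+1}\left(1+\frac{\delta_{2k}}{1-\delta_k}\right)$ and $\gamma_k^{RIP}=1+\frac{\delta_{2k+1}\sqrt{1+\delta_k}}{1-\delta_k}$. $S^*=\{i:x^*_i\neq0\}$. For $v\in\mathbb{R}^n$, $\mathrm{largest}_k(v)$ is the set of indices of the $k$ entries of $v$ with largest absolute value (ties broken by selecting the highest indices). For $S\subseteq\{1,\dots,n\}$, $A_S$ is the submatrix of columns indexed by $S$, $v_S$ the restriction of a vector to $S$, $A_S^\dagger$ the Moore–Penrose pseudoinverse of $A_S$. SEA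 with initialization $\mathcal{X}^0$ and step size $\eta$ generates, for $t=0,1,2,\dots$: $S^t=\mathrm{largest}_k(\mathcal{X}^t)$; $x^t_i=0$ for $i\notin S^t$ and $x^t_{S^t}=A_{S^t}^\dagger y$; $\mathcal{X}^{t+1}=\mathcal{X}^t-\eta A^T(Ax^t-y)$. The oracle direction is $u^t_i=-\eta x^*_i$ if $i\in S^*\setminus S^t$ and $u^t_i=0$ otherwise. *)

(* Defs.v *)
From HB Require Import structures.
From mathcomp Require Import all_boot all_order all_algebra.
From mathcomp Require Import classical_sets reals.
From Stdlib Require Import ClassicalEpsilon.

Set Implicit Arguments.
Unset Strict Implicit.
Unset Printing Implicit Defensive.

Import Order.TTheory GRing.Theory Num.Theory.
Local Open Scope ring_scope.

Section SEA.
Variable R : realType.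

Definition norm2 (p : nat) (v : 'cV[R]_p) : R :=
  Num.sqrt (\sum_(i < p) v i 0 ^+ 2).

Definition norminf (p : nat) (v : 'cV[R]_p) : R :=
  \big[Num.max/0]_(i < p) `|v i 0|.

Definition supp (p : nat) (v : 'cV[R]_p) : {set 'I_p} :=
  [set i | v i 0 != 0].

Definition rip_ok (m n : nat) (A : 'M[R]_(m, n)) (l : nat) (d : R) : Prop :=
  0 <= d /\
  forall x : 'cV[R]_n, (#|supp x| <= l)%N ->
    (1 - d) * norm2 x ^+ 2 <= norm2 (A *m x) ^+ 2 /\
    norm2 (A *m x) ^+ 2 <= (1 + d) * norm2 x ^+ 2.

Definition rip_const (m n : nat) (A : 'M[R]_(m, n)) (l : nat) : R :=
  inf [set d | rip_ok A l d].

Definition alphaRIP (m n : nat) (A : 'M[R]_(m, n)) (k : nat) : R :=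
  rip_const A k.*2.+1 * (1 + rip_const A k.*2 / (1 - rip_const A k)).

Definition gammaRIP (m n : nat) (A : 'M[R]_(m, n)) (k : nat) : R :=
  1 + rip_const A k.*2.+1 * Num.sqrt (1 + rip_const A k) / (1 - rip_const A k).

Definition ranks_before (n : nat) (v : 'cV[R]_n) (i j : 'I_n) : bool :=
  (`|v j 0| < `|v i 0|) || ((`|v i 0| == `|v j 0|) && (j < i)%N).

(* largest_k(v): indices of the k entries of largest absolute value,
   ties broken by selecting the highest indices *)
Definition largest (n k : nat) (v : 'cV[R]_n) : {set 'I_n} :=
  [set i | (#|[set j | ranks_before v j i]| < k)%N].

(* A_S : the submatrix of columns indexed by S (in increasing order) *)
Definition colsubS (m n : nat) (A : 'M[R]_(m, n)) (S : {set 'I_n}) :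
  'M[R]_(m, #|S|) :=
  \matrix_(i < m, j < #|S|) A i (enum_val j).

Definition extS (n : nat) (S : {set 'I_n}) (z : 'cV[R]_#|S|) : 'cV[R]_n :=
  \matrix_(i < n, j < 1) \sum_(l < #|S|) (if enum_val l == i then z l 0 else 0).

Definition is_MPinv (p q : nat) (M : 'M[R]_(p, q)) (X : 'M[R]_(q, p)) : Prop :=
  [/\ M *m X *m M = M, X *m M *m X = X,
      (M *m X)^T = M *m X & (X *m M)^T = X *m M].

Definition MPinv (p q : nat) (M : 'M[R]_(p, q)) : 'M[R]_(q, p) :=
  epsilon (inhabits 0) (is_MPinv M).

Definition sea_x (m n k : nat) (A : 'M[R]_(m, n)) (y : 'cV[R]_m)
  (X : 'cV[R]_n) : 'cV[R]_n :=
  let S := largest k X in extS (MPinv (colsubS A S) *m y).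

Definition sea_step (m n k : nat) (A : 'M[R]_(m, n)) (y : 'cV[R]_m) (eta : R)
  (X : 'cV[R]_n) : 'cV[R]_n :=
  X - eta *: (A^T *m (A *m sea_x k A y X - y)).

Definition sea_X (m n k : nat) (A : 'M[R]_(m, n)) (y : 'cV[R]_m) (eta : R)
  (X0 : 'cV[R]_n) (t : nat) : 'cV[R]_n :=
  iter t (sea_step k A y eta) X0.

Definition sea_St (m n k : nat) (A : 'M[R]_(m, n)) (y : 'cV[R]_m) (eta : R)
  (X0 : 'cV[R]_n) (t : nat) : {set 'I_n} :=
  largest k (sea_X k A y eta X0 t).

Definition sea_xt (m n k : nat) (A : 'M[R]_(m, n)) (y : 'cV[R]_m) (eta : R)
  (X0 : 'cV[R]_n) (t : nat) : 'cV[R]_n :=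
  sea_x k A y (sea_X k A y eta X0 t).

Definition oracle_u (n : nat) (eta : R) (xs : 'cV[R]_n) (St : {set 'I_n}) :
  'cV[R]_n :=
  \col_i (if i \in supp xs :\: St then - eta * xs i 0 else 0).

End SEA.

(* Main.v *)
Require Import Defs.
From HB Require Import structures.
From mathcomp Require Import all_boot all_order all_algebra.
From mathcomp Require Import classical_sets reals.
From mathcomp Require Import ring lra.
From Stdlib Require Import ClassicalEpsilon.
Set Implicit Arguments. Unset Strict Implicit. Unset Printing Implicit Defensive.
Import Order.TTheory GRing.Theory Num.Theory.
Local Open Scope ring_scope.

Section Vec.
Variable R : realType.

Definition dot p (u v : 'cV[R]_p) : R := \sum_(i < p) u i 0 * v i 0.

Lemma dotC p (u v : 'cV[R]_p) : dot u v = dot v u.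
Proof. by apply eq_bigr => i _; rewrite mulrC. Qed.

Lemma dot_quad p (s t : R) (u v : 'cV[R]_p) :
  dot (s *: u + t *: v) (s *: u + t *: v) =
  s ^+ 2 * dot u u + 2 * s * t * dot u v + t ^+ 2 * dot v v.
Proof.
rewrite /dot !mulr_sumr -!big_split /=; apply eq_bigr => i _; rewrite !mxE; ring.
Qed.

Lemma dotBr p (u v w : 'cV[R]_p) : dot u (v - w) = dot u v - dot u w.
Proof.
rewrite /dot -sumrB; apply eq_bigr => i _; rewrite !mxE; ring.
Qed.

Lemma dotDr p (u v w : 'cV[R]_p) : dot u (v + w) = dot u v + dot u w.
Proof.
rewrite /dot -big_split /=; apply eq_bigr => i _; rewrite !mxE; ring.
Qed.

Lemma dotZr p (u v : 'cV[R]_p) c : dot u (c *: v) = c * dot u v.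
Proof.
rewrite /dot mulr_sumr; apply eq_bigr => i _; rewrite !mxE; ring.
Qed.

Lemma dot0l p (v : 'cV[R]_p) : dot 0 v = 0.
Proof. by rewrite /dot big1 // => i _; rewrite mxE mul0r. Qed.

Lemma dot_mulmx m p (A : 'M[R]_(m, p)) u w : dot (A *m u) w = dot u (A^T *m w).
Proof.
rewrite /dot.
under eq_bigr => i _ do rewrite mxE mulr_suml.
rewrite exchange_big /=; apply eq_bigr => j _.
rewrite mxE mulr_sumr; apply eq_bigr => i _; rewrite !mxE; ring.
Qed.

Lemma dot_delta p (i : 'I_p) (w : 'cV[R]_p) : dot (delta_mx i 0) w = w i 0.
Proof.
rewrite /dot (bigD1 i) //= big1 => [|j ji]; rewrite !mxE ?eqxx /= ?mul1r ?addr0 //.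
by rewrite (negbTE ji) mul0r.
Qed.

Lemma dot_ge0 p (v : 'cV[R]_p) : 0 <= dot v v.
Proof. by apply sumr_ge0 => i _; rewrite -expr2 sqr_ge0. Qed.

Lemma norm2_sq p (v : 'cV[R]_p) : norm2 v ^+ 2 = dot v v.
Proof.
rewrite /norm2 sqr_sqrtr; last by apply sumr_ge0 => i _; rewrite sqr_ge0.
by apply eq_bigr => i _; rewrite expr2.
Qed.

Lemma norm2_ge0 p (v : 'cV[R]_p) : 0 <= norm2 v.
Proof. exact: sqrtr_ge0. Qed.

Lemma norm2_eq0 p (v : 'cV[R]_p) : norm2 v = 0 -> v = 0.
Proof.
move=> h; have h2 : dot v v = 0 by rewrite -norm2_sq h expr2 mul0r.
apply/matrixP => i j; rewrite (ord1 j) mxE.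
have := psumr_eq0P (P := predT) (F := fun i => v i 0 * v i 0) _ h2.
move=> /(_ _ i isT) H; apply/eqP; rewrite -[_ == 0]orbb -mulf_eq0 H //.
by move=> k _; rewrite -expr2 sqr_ge0.
Qed.

Lemma CS p (u v : 'cV[R]_p) : `|dot u v| <= norm2 u * norm2 v.
Proof.
set a := norm2 u; set b := norm2 v.
have a0 : 0 <= a by exact: norm2_ge0.
have b0 : 0 <= b by exact: norm2_ge0.
have [ae|anz] := eqVneq a 0.
  by rewrite (norm2_eq0 ae) dot0l normr0 ae mul0r.
have [be|bnz] := eqVneq b 0.
  by rewrite (norm2_eq0 be) dotC dot0l normr0 be mulr0.
have ha : dot u u = a ^+ 2 by rewrite norm2_sq.
have hb : dot v v = b ^+ 2 by rewrite norm2_sq.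
have hp := dot_ge0 (b *: u + a *: v).
have hm := dot_ge0 (b *: u + (- a) *: v).
rewrite dot_quad ha hb in hp; rewrite dot_quad ha hb in hm.
have ab : 0 < a * b by rewrite mulr_gt0 // lt0r ?anz ?bnz.
rewrite ler_norml; apply/andP; split.
  have : a * b * (- (a * b)) <= a * b * dot u v by nra.
  by rewrite ler_pM2l.
have : a * b * dot u v <= a * b * (a * b) by nra.
by rewrite ler_pM2l.
Qed.

Lemma norm2D p (u v : 'cV[R]_p) : norm2 (u + v) <= norm2 u + norm2 v.
Proof.
have h := dot_quad 1 1 u v; rewrite !scale1r in h.
have c := CS u v.
have e1 := norm2_sq (u + v); have e2 := norm2_sq u; have e3 := norm2_sq v.
have := norm2_ge0 (u + v); have := norm2_ge0 u; have := norm2_ge0 v.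
have : dot u v <= `|dot u v| by exact: ler_norm.
nra.
Qed.

Lemma norm2_le p (u v : 'cV[R]_p) :
  (forall i, `|u i 0| <= `|v i 0|) -> norm2 u <= norm2 v.
Proof.
move=> h; apply: ler_wsqrtr; apply: ler_sum => i _.
rewrite -(ger0_norm (sqr_ge0 (u i 0))) -(ger0_norm (sqr_ge0 (v i 0))) !normrX.
have := h i; have := normr_ge0 (u i 0); nra.
Qed.

Definition norminf_scale p (c : R) (v : 'cV[R]_p) :
  norminf (c *: v) = `|c| * norminf v.
Proof.
rewrite /norminf (big_endo (fun x => `|c| * x)) ?mulr0 //.
  by apply eq_bigr => i _; rewrite mxE normrM.
by move=> x y; rewrite maxr_pMr.
Qed.

Lemma norminf_le p (v : 'cV[R]_p) c :
  0 <= c -> (forall i, `|v i 0| <= c) -> norminf v <= c.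
Proof.
move=> c0 h; rewrite /norminf; elim/big_ind: _ => // x y hx hy.
by rewrite ge_max hx hy.
Qed.

End Vec.

Section RIP.
Variable R : realType.
Variables m n : nat.
Variable A : 'M[R]_(m, n).

Lemma norm2_sum p (v : 'cV[R]_p) : norm2 v ^+ 2 = \sum_i v i 0 ^+ 2.
Proof. by rewrite norm2_sq /dot; apply eq_bigr => i _; rewrite expr2. Qed.

Lemma rip_ex l : exists d, rip_ok A l d.
Proof.
pose T := \sum_(i < m) norm2 (row i A)^T ^+ 2.
have T0 : 0 <= T by apply sumr_ge0 => i _; rewrite sqr_ge0.
exists (1 + T); split; first lra.
move=> x _.
have hA : norm2 (A *m x) ^+ 2 <= T * norm2 x ^+ 2.
  rewrite [X in X <= _]norm2_sum /T mulr_suml; apply ler_sum => i _.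
  have -> : (A *m x) i 0 = dot (row i A)^T x.
    by rewrite mxE /dot; apply eq_bigr => j _; rewrite !mxE.
  have := CS (row i A)^T x; have := normr_ge0 (dot (row i A)^T x).
  rewrite -(real_normK (num_real (dot (row i A)^T x))).
  have := norm2_ge0 x; have := norm2_ge0 (row i A)^T. nra.
have := sqr_ge0 (norm2 x); have := sqr_ge0 (norm2 (A *m x)).
split; nra.
Qed.

Lemma rip_has_inf l : has_inf [set d | rip_ok A l d].
Proof.
split; first by have [d hd] := rip_ex l; exists d.
by exists 0 => d [].
Qed.

Lemma rip_ge0 l : 0 <= rip_const A l.
Proof.
apply: lb_le_inf; first by have [d hd] := rip_ex l; exists d.
by move=> d [].
Qed.

Lemma rip_mono l1 l2 : (l1 <= l2)%N -> rip_const A l1 <= rip_const A l2.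
Proof.
move=> hl; apply: lb_le_inf; first by have [d hd] := rip_ex l2; exists d.
move=> d [d0 hd]; apply: (ge_inf (rip_has_inf l1).2).
split => // x hx; apply: hd; exact: leq_trans hx hl.
Qed.

Lemma rip_bounds l (x : 'cV[R]_n) : (#|supp x| <= l)%N ->
  (1 - rip_const A l) * norm2 x ^+ 2 <= norm2 (A *m x) ^+ 2 /\
  norm2 (A *m x) ^+ 2 <= (1 + rip_const A l) * norm2 x ^+ 2.
Proof.
move=> hx; set N := norm2 x ^+ 2; set d0 := rip_const A l.
have N0 : 0 <= N by rewrite /N sqr_ge0.
split; apply/ler_addgt0Pr => eps he.
- pose q := eps / (N + 1).
  have q0 : 0 < q by rewrite /q divr_gt0 // ltr_wpDl.
  have hq : q * N + q = eps by rewrite /q; field; lra.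
  have [d [_ hd] hdl] := inf_adherent q0 (rip_has_inf l).
  have [h1 _] := hd x hx.
  rewrite -/N in h1; rewrite /d0 /rip_const in hdl *; clearbody q N; nra.
- pose q := eps / (N + 1).
  have q0 : 0 < q by rewrite /q divr_gt0 // ltr_wpDl.
  have hq : q * N + q = eps by rewrite /q; field; lra.
  have [d [_ hd] hdl] := inf_adherent q0 (rip_has_inf l).
  have [_ h1] := hd x hx.
  rewrite -/N in h1; rewrite /d0 /rip_const in hdl *; clearbody q N; nra.
Qed.


Lemma supp_comb (s t : R) (u v : 'cV[R]_n) :
  supp (s *: u + t *: v) \subset supp u :|: supp v.
Proof.
apply/fintype.subsetP => i; rewrite !inE !mxE; apply: contraTT.
by rewrite negb_or => /andP[/negPn/eqP -> /negPn/eqP ->]; rewrite !mulr0 addr0 eqxx.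
Qed.

Lemma dot_disj p (u v : 'cV[R]_p) : [disjoint supp u & supp v] -> dot u v = 0.
Proof.
move=> hd; rewrite /dot big1 // => i _.
have [hu|hu] := boolP (i \in supp u).
  by have := disjointFr hd hu; rewrite inE => /negbFE/eqP ->; rewrite mulr0.
by move: hu; rewrite inE => /negbNE/eqP ->; rewrite mul0r.
Qed.

Lemma rip_dot l (u v : 'cV[R]_n) : dot u v = 0 ->
  (#|supp u :|: supp v| <= l)%N ->
  `|dot (A *m u) (A *m v)| <= rip_const A l * norm2 u * norm2 v.
Proof.
move=> hd hl.
set a := norm2 u; set b := norm2 v.
have a0 : 0 <= a by exact: norm2_ge0.
have b0 : 0 <= b by exact: norm2_ge0.
have [ae|anz] := eqVneq a 0.
  by rewrite (norm2_eq0 ae) mulmx0 dot0l normr0 ae mulr0 mul0r.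
have [be|bnz] := eqVneq b 0.
  by rewrite (norm2_eq0 be) mulmx0 dotC dot0l normr0 be mulr0.
have duv := hd.
have hw : forall s t, (#|supp (s *: u + t *: v)| <= l)%N.
  by move=> s t; apply: leq_trans hl; apply: subset_leq_card; apply: supp_comb.
have hAw : forall s t, A *m (s *: u + t *: v) = s *: (A *m u) + t *: (A *m v).
  by move=> s t; rewrite mulmxDr !scalemxAr.
have hN : forall s t, norm2 (s *: u + t *: v) ^+ 2 = s ^+ 2 * a ^+ 2 + t ^+ 2 * b ^+ 2.
  by move=> s t; rewrite norm2_sq dot_quad duv -!norm2_sq -/a -/b; ring.
have hAN : forall s t, norm2 (A *m (s *: u + t *: v)) ^+ 2 =
   s ^+ 2 * dot (A *m u) (A *m u) + 2 * s * t * dot (A *m u) (A *m v)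
   + t ^+ 2 * dot (A *m v) (A *m v).
  by move=> s t; rewrite hAw norm2_sq dot_quad.
have [l1 u1] := rip_bounds (hw b a); rewrite hN hAN in l1 u1.
have [l2 u2] := rip_bounds (hw b (- a)); rewrite hN hAN in l2 u2.
have ab : 0 < a * b by rewrite mulr_gt0 // lt0r ?anz ?bnz.
set P := dot (A *m u) (A *m v) in l1 u1 l2 u2 *.
set U := dot (A *m u) (A *m u) in l1 u1 l2 u2.
set V := dot (A *m v) (A *m v) in l1 u1 l2 u2.
set d := rip_const A l in l1 u1 l2 u2 *.
rewrite ler_norml; apply/andP; split.
  have : a * b * (- (d * a * b)) <= a * b * P by clearbody P U V d; nra.
  by rewrite ler_pM2l.
have : a * b * P <= a * b * (d * a * b) by clearbody P U V d; nra.
by rewrite ler_pM2l.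
Qed.

End RIP.

Section Largest.
Variable R : realType.
Variables n k : nat.
Variable v : 'cV[R]_n.

Lemma rb_irr i : ~~ ranks_before v i i.
Proof. by rewrite /ranks_before ltxx ltnn andbF. Qed.

Lemma rb_trans i j l : ranks_before v i j -> ranks_before v j l -> ranks_before v i l.
Proof.
rewrite /ranks_before.
case/orP => [h1|/andP[/eqP e1 h1]]; case/orP => [h2|/andP[/eqP e2 h2]].
- by rewrite (lt_trans h2 h1).
- by rewrite -e2 h1.
- by rewrite e1 h2.
- by rewrite e1 e2 eqxx (ltn_trans h2 h1) orbT.
Qed.

Lemma rb_total i j : i != j -> ranks_before v i j || ranks_before v j i.
Proof.
move=> ij; rewrite /ranks_before.
case: (ltgtP `|v i 0| `|v j 0|) => //= _; case: (ltngtP i j) => //= h.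
by move: ij; rewrite (val_inj h) eqxx.
Qed.

Definition rnk i := #|[set j | ranks_before v j i]|.

Lemma rnk_lt i j : ranks_before v i j -> (rnk i < rnk j)%N.
Proof.
move=> h; apply: proper_card; apply/properP; split.
  apply/fintype.subsetP => x; rewrite !inE => hx; exact: rb_trans hx h.
by exists i; rewrite !inE ?h ?rb_irr.
Qed.

Lemma rnk_inj : injective rnk.
Proof.
move=> i j e; apply/eqP; apply/negPn/negP => ij.
case/orP: (rb_total ij) => /rnk_lt; rewrite e ltnn //.
Qed.

Lemma largest_card : (#|largest k v| <= k)%N.
Proof.
rewrite cardE -(size_map rnk) -[k in (_ <= k)%N](size_iota 0).
apply: uniq_leq_size.
  by rewrite map_inj_in_uniq ?enum_uniq // => x y _ _; apply: rnk_inj.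
move=> x /mapP[i]; rewrite mem_enum inE => hi ->.
by rewrite mem_iota add0n.
Qed.

End Largest.

Section Sub.
Variable R : realType.
Variables m n : nat.
Variable A : 'M[R]_(m, n).
Variable S : {set 'I_n}.

Lemma extS_in (z : 'cV[R]_#|S|) l : (extS z) (enum_val l) 0 = z l 0.
Proof.
rewrite mxE (bigD1 l) //= eqxx big1 ?addr0 // => j jl.
case: eqP => // /enum_val_inj e; by move: jl; rewrite e eqxx.
Qed.

Lemma extS_out (z : 'cV[R]_#|S|) i : i \notin S -> (extS z) i 0 = 0.
Proof.
move=> hi; rewrite mxE big1 // => j _; case: eqP => // e.
by move: hi; rewrite -e enum_valP.
Qed.

Lemma mul_extS (z : 'cV[R]_#|S|) : A *m extS z = colsubS A S *m z.
Proof.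
apply/matrixP => r c; rewrite (ord1 c) !mxE.
under eq_bigr => j _ do rewrite mxE mulr_sumr.
rewrite exchange_big /=; apply eq_bigr => l _.
rewrite (bigD1 (enum_val l)) //= eqxx big1 ?addr0 ?mxE // => j jl.
case: eqP => [e|_]; last by rewrite mulr0.
by move: jl; rewrite e eqxx.
Qed.

Lemma trmul_S (r : 'cV[R]_m) l :
  (A^T *m r) (enum_val l) 0 = ((colsubS A S)^T *m r) l 0.
Proof. by rewrite !mxE; apply eq_bigr => i _; rewrite !mxE. Qed.

End Sub.

Section MP.
Variable R : realType.

Lemma MP_normal p q (M : 'M[R]_(p, q)) :
  (exists X, is_MPinv M X) -> M^T *m M *m MPinv M = M^T.
Proof.
move=> hex; have [h1 _ h3 _] := epsilon_spec (inhabits (0 : 'M[R]_(q, p))) (is_MPinv M) hex.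
rewrite -/(MPinv M) in h1 h3.
by rewrite -mulmxA -h3 -trmx_mul h1.
Qed.

Lemma MP_exists p q (M : 'M[R]_(p, q)) :
  (forall w : 'cV[R]_q, M *m w = 0 -> w = 0) -> exists X, is_MPinv M X.
Proof.
move=> inj.
set B := M^T *m M.
have Binj : forall w : 'M[R]_(q, 1), B *m w = 0 -> w = 0.
  move=> w hw; apply: inj; apply: norm2_eq0.
  have : dot (M *m w) (M *m w) = 0 by rewrite dot_mulmx mulmxA -/B hw /dot big1 // => i _; rewrite mxE mulr0.
  by move=> h; have := norm2_sq (M *m w); rewrite h => /eqP; rewrite sqrf_eq0 => /eqP.
have BT : B^T = B by rewrite /B trmx_mul trmxK.
have Bu : B \in unitmx.
  rewrite unitmxE unitfE; apply/negP => /det0P[v vn0 hv].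
  have : B *m v^T = 0 by rewrite -BT -trmx_mul hv trmx0.
  by move/Binj => /(congr1 trmx); rewrite trmxK trmx0 => e; move: vn0; rewrite e eqxx.
exists (invmx B *m M^T); split.
- by rewrite -!mulmxA -/B mulVmx // mulmx1.
- by rewrite -!mulmxA (mulmxA M^T M) -/B (mulmxA B) mulmxV // mul1mx.
- by rewrite !trmx_mul trmxK trmx_inv BT mulmxA.
- by rewrite -mulmxA -/B mulVmx // trmx1.
Qed.

End MP.

Theorem lemmaC11 (R : realType) (m n k : nat) (A : 'M[R]_(m, n))
  (xs : 'cV[R]_n) (e : 'cV[R]_m) (y : 'cV[R]_m)
  (X0 : 'cV[R]_n) (eta : R) (t : nat) :
  (0 < m)%N -> (0 < n)%N -> (0 < k)%N ->
  (k.*2.+1 <= n)%N ->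
  rip_const A k.*2.+1 < 1 ->
  (forall j : 'I_n, norm2 (col j A) = 1) ->
  (#|supp xs| <= k)%N ->
  y = A *m xs + e ->
  0 < eta ->
  let xt := sea_xt k A y eta X0 t in
  let ut := oracle_u eta xs (sea_St k A y eta X0 t) in
  let bt := ut - eta *: (A^T *m (A *m xt - y)) in
  norminf (eta^-1 *: ut - A^T *m (A *m xt - y)) = eta^-1 * norminf bt /\
  eta^-1 * norminf bt <= alphaRIP A k * norm2 xs + gammaRIP A k * norm2 e.
Proof.
move=> hm hn hk hkn hrip hcol hsupp hy heta xt ut bt.
pose X := sea_X k A y eta X0 t.
pose S := largest k X.
pose M := colsubS A S.
pose w := MPinv M *m y.
have hxt : xt = extS w by [].
have hut : ut = oracle_u eta xs S by [].
have hbt : bt = ut - eta *: (A^T *m (A *m xt - y)) by [].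
clearbody bt; clearbody xt ut.
have [d1 hd1] : exists d1, d1 = rip_const A k.*2.+1 by eexists.
have [d2 hd2] : exists d2, d2 = rip_const A k.*2 by eexists.
have [dk hdk] : exists dk, dk = rip_const A k by eexists.
have dk0 : 0 <= dk by rewrite hdk rip_ge0.
have dk2 : dk <= d2 by rewrite hdk hd2 rip_mono // -addnn leq_addr.
have d21 : d2 <= d1 by rewrite hd1 hd2 rip_mono.
rewrite -hd1 in hrip.
have hS : (#|S| <= k)%N by apply: largest_card.
have hsup : forall w' : 'cV[R]_#|S|, (#|supp (extS w')| <= k)%N.
  move=> w'; apply: leq_trans hS; apply: subset_leq_card.
  apply/fintype.subsetP => i; rewrite inE; apply: contraR => hi.
  by rewrite extS_out.
have inj : forall w' : 'cV[R]_#|S|, M *m w' = 0 -> w' = 0.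
  move=> w' h.
  have h0 : A *m extS w' = 0 by rewrite mul_extS.
  have [lo _] := rip_bounds A (hsup w').
  have z0 : norm2 (0 : 'cV[R]_m) ^+ 2 = 0 by rewrite norm2_sq dot0l.
  rewrite h0 -hdk z0 in lo.
  have N0 := sqr_ge0 (norm2 (extS w')).
  have : norm2 (extS w') ^+ 2 = 0 by nra.
  move/eqP; rewrite sqrf_eq0 => /eqP /norm2_eq0 ew.
  by apply/matrixP => l c; rewrite (ord1 c) -extS_in ew !mxE.
have hMP := MP_normal (MP_exists inj).
have hAxt : A *m xt = M *m w by rewrite hxt mul_extS.
have hnorm : M^T *m (A *m xt - y) = 0.
  by rewrite hAxt mulmxBr /w !mulmxA hMP subrr.
have [G hG] : exists G, G = A^T *m (A *m xt - y) by eexists.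
have hzS : forall i, i \in S -> G i 0 = 0.
  move=> i hi; rewrite hG -(enum_rankK_in hi hi) trmul_S hnorm mxE //.
clearbody w; clearbody M; clearbody S.
have hbt' : bt = eta *: (eta^-1 *: ut - G).
  by rewrite hbt -hG scalerBr scalerA mulfV ?gt_eqF // scale1r.
rewrite -hG hbt' norminf_scale gtr0_norm // mulrA mulVf ?gt_eqF // mul1r.
split; first done.
have [xsS hxsS] : exists xsS : 'cV[R]_n, xsS = \col_j (if j \in S then xs j 0 else 0) by eexists.
have [v hv] : exists v, v = xt - xsS by eexists.
have [xsC hxsC] : exists xsC, xsC = xs - xsS by eexists.
have hvS : forall j, j \notin S -> v j 0 = 0.
  by move=> j hj; rewrite hv hxsS !mxE hxt extS_out // (negbTE hj) subrr.
have hCS : forall j, j \in S -> xsC j 0 = 0.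
  by move=> j hj; rewrite hxsC hxsS !mxE hj subrr.
have hCle : forall j, `|xsC j 0| <= `|xs j 0|.
  move=> j; case: (boolP (j \in S)) => hj; first by rewrite hCS // normr0.
  by rewrite hxsC hxsS !mxE (negbTE hj) subr0.
have dvG : dot v G = 0.
  rewrite /dot big1 // => j _; case: (boolP (j \in S)) => hj.
    by rewrite hzS // mulr0.
  by rewrite hvS // mul0r.
have dvC : dot v xsC = 0.
  rewrite /dot big1 // => j _; case: (boolP (j \in S)) => hj.
    by rewrite hCS // mulr0.
  by rewrite hvS // mul0r.
have hvxs : v - xsC = xt - xs by rewrite hv hxsC opprB addrA subrK.
have hr : A *m xt - y = A *m v - A *m xsC - e.
  by rewrite -mulmxBr hvxs mulmxBr hy opprD addrA.
have hEq : dot (A *m v) (A *m v) - dot (A *m v) (A *m xsC) - dot (A *m v) e = 0.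
  by rewrite -!dotBr -hr -dvG hG dot_mulmx.
have hvsupp : (#|supp v| <= k)%N.
  apply: leq_trans hS; apply: subset_leq_card.
  apply/fintype.subsetP => i; rewrite inE; apply: contraR => hi.
  by rewrite hvS.
have hcardU : (#|S :|: supp xs| <= k.*2)%N.
  apply: leq_trans (leq_card_setU S (supp xs)).1 _.
  by rewrite -addnn leq_add.
have hvC : (#|supp v :|: supp xsC| <= k.*2)%N.
  apply: leq_trans hcardU; apply: subset_leq_card; apply/fintype.subsetP => i.
  rewrite !inE; apply: contraTT; rewrite !negb_or => /andP[h1 h2].
  have h3 : xs i 0 = 0 by move: h2; rewrite negbK => /eqP.
  by rewrite hvS // hxsC hxsS !mxE (negbTE h1) h3 subrr !eqxx.
have [lo hi] := rip_bounds A hvsupp.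
rewrite -hdk in lo hi.
have P1 := rip_dot A dvC hvC; rewrite -hd2 in P1.
have P2 := CS (A *m v) e.
have [s hs] : exists s, s = Num.sqrt (1 + dk) by eexists.
have s0 : 0 <= s by rewrite hs sqrtr_ge0.
have s2 : s ^+ 2 = 1 + dk by rewrite hs sqr_sqrtr //; lra.
have nv0 := norm2_ge0 v.
have nA0 := norm2_ge0 (A *m v).
have sq_le : forall a b : R, 0 <= a -> 0 <= b -> a ^+ 2 <= b ^+ 2 -> a <= b.
  by move=> a b a0 b0 hab; nra.
have nAv : norm2 (A *m v) <= s * norm2 v.
  apply: sq_le => //; first by apply: mulr_ge0.
  by rewrite exprMn s2.
have nC : norm2 xsC <= norm2 xs by apply: norm2_le.
have X0' := norm2_ge0 xs.
have E0 := norm2_ge0 e.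
have nC0 := norm2_ge0 xsC.
have d20 : 0 <= d2 by lra.
have t1 : dot (A *m v) (A *m xsC) <= d2 * norm2 v * norm2 xs.
  apply: le_trans (ler_norm _) _; apply: le_trans P1 _.
  by apply: ler_wpM2l => //; apply: mulr_ge0.
have t2 : dot (A *m v) e <= s * norm2 v * norm2 e.
  apply: le_trans (ler_norm _) _; apply: le_trans P2 _.
  by apply: ler_wpM2r.
have hAA : dot (A *m v) (A *m v) = norm2 (A *m v) ^+ 2 by rewrite norm2_sq.
have key : (1 - dk) * norm2 v <= d2 * norm2 xs + s * norm2 e.
  have [nvz|nvp] := eqVneq (norm2 v) 0.
    rewrite nvz mulr0; apply: addr_ge0; apply: mulr_ge0 => //.
  have nvp' : 0 < norm2 v by rewrite lt0r nvp.
  have : (1 - dk) * norm2 v * norm2 v <= (d2 * norm2 xs + s * norm2 e) * norm2 v.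
    rewrite expr2 in lo; nra.
  by rewrite ler_pM2r.
have hz : norm2 (xt - xs) <= norm2 v + norm2 xs.
  rewrite -hvxs; apply: le_trans (norm2D _ _) _; apply: lerD => //.
  by apply: norm2_le => j; rewrite mxE normrN.
have D0 : 0 < 1 - dk by lra.
have hc : norm2 e + d1 * (norm2 v + norm2 xs) <=
    alphaRIP A k * norm2 xs + gammaRIP A k * norm2 e.
  rewrite /alphaRIP /gammaRIP -hd1 -hd2 -hdk -hs.
  have [Di hDi] : exists Di, Di = (1 - dk)^-1 by eexists.
  rewrite -hDi.
  have Di0 : 0 <= Di by rewrite hDi invr_ge0 ltW.
  have hnv : norm2 v <= Di * (d2 * norm2 xs + s * norm2 e).
    have -> : norm2 v = Di * ((1 - dk) * norm2 v) by rewrite hDi mulrA mulVf ?gt_eqF // mul1r.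
    by apply: ler_wpM2l.
  have d10 : 0 <= d1 by lra.
  have := ler_wpM2l d10 hnv.
  nra.
have d10 : 0 <= d1 by lra.
have hc0 : 0 <= alphaRIP A k * norm2 xs + gammaRIP A k * norm2 e.
  apply: le_trans hc; apply: addr_ge0 => //; apply: mulr_ge0 => //; by apply: addr_ge0.
apply: norminf_le => // i.
rewrite !mxE.
case: (boolP (i \in S)) => hiS.
  have -> : ut i 0 = 0 by rewrite hut mxE !inE hiS.
  by rewrite hzS // mulr0 subrr normr0.
have hu : eta^-1 * ut i 0 = - xs i 0.
  rewrite hut mxE !inE (negbTE hiS) /=.
  case: ifP => [_|/negbFE/eqP ->]; last by rewrite mulr0 oppr0.
  by field; rewrite gt_eqF.
have hGi : G i 0 = dot (col i A) (A *m xt - y) by rewrite colE dot_mulmx dot_delta hG.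
have [z hzdef] : exists z, z = xt - xs by eexists.
have [z' hz'] : exists z', z' = z - z i 0 *: delta_mx i 0 by eexists.
have hr2 : A *m xt - y = A *m z' + z i 0 *: col i A - e.
  by rewrite hy colE scalemxAr -mulmxDr hz' subrK hzdef mulmxBr opprD addrA.
have hcc : dot (col i A) (col i A) = 1 by rewrite -norm2_sq hcol expr1n.
have hzi : z i 0 = - xs i 0 by rewrite hzdef !mxE hxt extS_out // sub0r.
rewrite hu hGi hr2 dotBr dotDr dotZr hcc hzi.
have -> : - xs i 0 - (dot (col i A) (A *m z') + - xs i 0 * 1 - dot (col i A) e)
   = dot (col i A) e - dot (col i A) (A *m z') by ring.
have hQ : `|dot (col i A) e| <= norm2 e by have := CS (col i A) e; rewrite hcol mul1r.
have hdz : dot (delta_mx i 0) z' = 0.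
  by rewrite dot_delta hz' !mxE !eqxx /= mulr1 subrr.
have hcard : (#|supp (delta_mx i 0 : 'cV[R]_n)%R :|: supp z'| <= k.*2.+1)%N.
  apply: leq_trans (_ : (#|i |: (S :|: supp xs)| <= _)%N).
    apply: subset_leq_card; apply/fintype.subsetP => j; rewrite !inE.
    apply: contraTT; rewrite !negb_or => /andP[ji /andP[jS jx]].
    move: jx; rewrite negbK => /eqP jx.
    by rewrite hz' hzdef !mxE (negbTE ji) /= hxt extS_out // jx !mulr0 !subr0 !eqxx.
  rewrite cardsU1; apply: leq_trans (leq_add (leq_b1 _) hcardU) _.
  by rewrite add1n.
have hP0 := rip_dot A hdz hcard; rewrite -hd1 -colE in hP0.
have nd : norm2 (delta_mx i 0 : 'cV[R]_n) <= 1.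
  have h := norm2_sq (delta_mx i 0 : 'cV[R]_n).
  rewrite dot_delta mxE !eqxx /= in h.
  have := norm2_ge0 (delta_mx i 0 : 'cV[R]_n); nra.
have nz'0 := norm2_ge0 z'.
have nd0 := norm2_ge0 (delta_mx i 0 : 'cV[R]_n).
have hP : `|dot (col i A) (A *m z')| <= d1 * norm2 z'.
  apply: le_trans hP0 _; rewrite -mulrA; apply: ler_wpM2l => //; nra.
have hz'le : norm2 z' <= norm2 z.
  apply: norm2_le => j; rewrite hz' !mxE.
  have [->|nji] := eqVneq j i; first by rewrite !eqxx /= mulr1 subrr normr0 normr_ge0.
  by rewrite /= mulr0 subr0.
rewrite -hzdef in hz.
have := ler_wpM2l d10 (le_trans hz'le hz).
have := ler_normB (dot (col i A) e) (dot (col i A) (A *m z')).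
lra.
Qed.
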